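(* The language class $\mathbf{GRLOWJ}$ is a proper subset of the class $\mathbf{CS}$ of context-sensitive languages, i.e., $\mathbf{GRLOWJ}\subset\mathbf{CS}$.
   Context: $\mathbf{CS}$ is the class of context-sensitive languages (languages accepted by linear bounded automata). ''Subword'' means a contiguous factor. A GRLOWJFA is a tuple $\mathcal{A}=(\Sigma,Q,q_0,F,R)$ with $\Sigma$ a finite alphabet, $Q$ a finite state set, $q_0\in Q$, $F\subseteq Q$, and $R\subset Q\times\Sigma^+\times Q$ a finite set of rules such that for each $p\in Q$, $w\in\Sigma^+$ at most one $q$ has $(p,w,q)\in R$ (meaning: go from $p$ to $q$ deleting $w$). $\Sigma_p=\{w:(p,w,q)\in R\text{ for some }q\}$. Configurations lie in $\Sigma^*Q\Sigma^*$. Moves $\curvearrowright$: (1) for $t,u,v\in\Sigma^*$ and $(p,x,q)\in R$: $tpuxv\curvearrowright tuqv$ provided $u$ contains no word of $\Sigma_p$ as a subword and there are no $u_1,x_2\in\Sigma^*$, $u_2,x_1\in\Sigma^+$ with $u=u_1u_2$, $x=x_1x_2$, $u_2x_1=x$; (2) for $x\in\Sigma^+$, $y\in\Sigma^*$ with $y$ containing no word of $\Sigma_p$ as a subword: $xpy\curvearrowright pxy$. $L_{GRL}(\mathcal{A})=\{w\in\Sigma^*: q_0w\curvearrowright^* q_f \text{ for some } q_f\in F\}$. $\mathbf{GRLOWJ}$ is the class of languages so accepted. *)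

(* Defs.v *)
From mathcomp Require Import all_boot.
Set Implicit Arguments. Unset Strict Implicit. Unset Printing Implicit Defensive.

Inductive star (T : Type) (R : T -> T -> Prop) : T -> T -> Prop :=
| star_refl x : star R x x
| star_step x y z : R x y -> star R y z -> star R x z.

Record grlowjfa (Sigma : finType) := GRLOWJFA {
  gstate : finType;
  gstart : gstate;
  gfinal : {set gstate};
  grules : seq (gstate * seq Sigma * gstate);
  grules_nonempty : forall p w q, (p, w, q) \in grules -> w != [::];
  grules_det : forall p w q q',
      (p, w, q) \in grules -> (p, w, q') \in grules -> q = q'
}.

Definition in_Sigma_p (Sigma : finType) (A : grlowjfa Sigma) (p : gstate A)
  (w : seq Sigma) : Prop := exists q, (p, w, q) \in grules A.

Definition no_factor (Sigma : finType) (A : grlowjfa Sigma) (p : gstate A)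
  (u : seq Sigma) : Prop := forall w, @in_Sigma_p Sigma A p w -> ~~ infix w u.

Definition no_overlap (Sigma : finType) (u x : seq Sigma) : Prop :=
  ~ exists u1 u2 x1 x2 : seq Sigma,
      [/\ u = u1 ++ u2, x = x1 ++ x2, u2 <> [::], x1 <> [::] & u2 ++ x1 = x].

(* configurations t p v in Sigma^* Q Sigma^*, as triples (t, p, v) *)
Definition gconfig (Sigma : finType) (A : grlowjfa Sigma) : Type :=
  (seq Sigma * gstate A * seq Sigma)%type.

Inductive gstep (Sigma : finType) (A : grlowjfa Sigma) : gconfig A -> gconfig A -> Prop :=
| gstep_rule (t u x v : seq Sigma) (p q : gstate A) :
    (p, x, q) \in grules A -> @no_factor Sigma A p u -> no_overlap u x ->
    gstep (t, p, u ++ x ++ v) (t ++ u, q, v)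
| gstep_jump (x y : seq Sigma) (p : gstate A) :
    x != [::] -> @no_factor Sigma A p y ->
    gstep (x, p, y) ([::], p, x ++ y).

Definition L_GRL (Sigma : finType) (A : grlowjfa Sigma) (w : seq Sigma) : Prop :=
  exists qf, qf \in gfinal A /\
    star (@gstep Sigma A) ([::], gstart A, w) ([::], qf, [::]).

Definition GRLOWJ (Sigma : finType) (L : seq Sigma -> Prop) : Prop :=
  exists A : grlowjfa Sigma, forall w, L w <-> L_GRL A w.

(* Nondeterministic one-tape TM whose tape holds the input between a left and a
   right endmarker, which it can neither overwrite nor move beyond.
   Tape alphabet ltape contains (an injective copy of) Sigma.
   ldeltaL p p' : at the left endmarker, go to p' and move right.
   ldeltaR p p' : at the right endmarker, go to p' and move left.
   ldelta p a p' b d : reading a, go to p', write b, move right if d else left. *)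
Record lba (Sigma : finType) := LBA {
  lstate : finType;
  ltape : finType;
  linput : Sigma -> ltape;
  linput_inj : injective linput;
  lstart : lstate;
  lacc : {set lstate};
  ldeltaL : lstate -> lstate -> bool;
  ldeltaR : lstate -> lstate -> bool;
  ldelta : lstate -> ltape -> lstate -> ltape -> bool -> bool
}.

(* configuration (state, tape contents, head position); position 0 is the left
   endmarker, positions 1..n the tape cells, position n+1 the right endmarker *)
Definition lconfig (Sigma : finType) (M : lba Sigma) : Type :=
  (lstate M * seq (ltape M) * nat)%type.

Inductive lstep (Sigma : finType) (M : lba Sigma) : lconfig M -> lconfig M -> Prop :=
| lstep_L (p p' : lstate M) tp :
    ldeltaL p p' -> lstep (p, tp, 0) (p', tp, 1)
| lstep_R (p p' : lstate M) tp :
    ldeltaR p p' -> lstep (p, tp, (size tp).+1) (p', tp, size tp)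
| lstep_T (p p' : lstate M) (t1 t2 : seq (ltape M)) (a b : ltape M) (d : bool) :
    ldelta p a p' b d ->
    lstep (p, t1 ++ a :: t2, (size t1).+1)
          (p', t1 ++ b :: t2, if d then (size t1).+2 else size t1).

Definition lba_accepts (Sigma : finType) (M : lba Sigma) (w : seq Sigma) : Prop :=
  exists (p : lstate M) (tp : seq (ltape M)) (i : nat), p \in lacc M /\
    star (@lstep Sigma M) (lstart M, map (linput M) w, 0) (p, tp, i).

Definition CS (Sigma : finType) (L : seq Sigma -> Prop) : Prop :=
  exists M : lba Sigma, forall w, L w <-> lba_accepts M w.

(* Main.v *)
Require Import Defs.
From mathcomp Require Import all_boot.
From mathcomp Require Import zify.
From Stdlib Require Import ClassicalEpsilon.
Set Implicit Arguments. Unset Strict Implicit. Unset Printing Implicit Defensive.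

Lemma star_trans T (R : T -> T -> Prop) x y z :
  star R x y -> star R y z -> star R x z.
Proof. by elim=> // a b c Hab _ IH Hc; apply: star_step Hab (IH Hc). Qed.

Lemma star_one T (R : T -> T -> Prop) x y : R x y -> star R x y.
Proof. by move=> H; apply: star_step H (star_refl _ _). Qed.

Definition pb (P : Prop) : bool := if excluded_middle_informative P then true else false.
Lemma pbP (P : Prop) : pb P -> P.
Proof. by rewrite /pb; case: excluded_middle_informative. Qed.
Lemma pbI (P : Prop) : P -> pb P.
Proof. by rewrite /pb; case: excluded_middle_informative. Qed.

Lemma split_at T (s : seq T) i : i < size s -> exists s1 a s2, s = s1 ++ a :: s2 /\ size s1 = i.
Proof.
elim: s i => [|a s IH] [|i] //= H.
- by exists [::], a, s.
- have [s1 [b [s2 [-> <-]]]] := IH i H.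
  by exists (a :: s1), b, s2.
Qed.

Lemma ret_run Sigma (M : lba Sigma) (s : lstate M) :
  (forall a, ldelta s a s a false) ->
  forall tp i, i <= size tp -> star (@lstep Sigma M) (s, tp, i) (s, tp, 0).
Proof.
move=> Hs tp; elim=> [|i IH] Hi; first exact: star_refl.
have [t1 [a [t2 [E1 E2]]]] := split_at Hi.
apply: star_step (IH (ltnW Hi)).
have := @lstep_T Sigma M s s t1 t2 a a false (Hs a).
by rewrite -E1 E2.
Qed.

Lemma skip_run Sigma (M : lba Sigma) (s : lstate M) (P : pred (ltape M)) :
  (forall a, P a -> ldelta s a s a true) ->
  forall r l rest, all P r ->
  star (@lstep Sigma M) (s, l ++ r ++ rest, (size l).+1) (s, l ++ r ++ rest, (size (l ++ r)).+1).
Proof.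
move=> Hs; elim=> [|a r IH] l rest /=.
- by rewrite cats0 => _; apply: star_refl.
- case/andP=> Pa Pr.
  apply: (star_step (y := (s, (l ++ [:: a]) ++ r ++ rest, (size (l ++ [:: a])).+1))).
  + have := @lstep_T Sigma M s s l (r ++ rest) a a true (Hs a Pa).
    by rewrite -catA size_cat addn1.
  + by have := IH (l ++ [:: a]) rest Pr; rewrite -!catA.
Qed.

Lemma cat_split T (l r t1 t2 : seq T) : l ++ r = t1 ++ t2 -> size l = size t1 -> l = t1 /\ r = t2.
Proof.
move=> E S.
have E1 : l = t1 by rewrite -(take_size_cat r S) E take_size_cat.
split=> //.
by rewrite -(drop_size_cat r (erefl (size l))) E S drop_size_cat.
Qed.

Lemma cat_nil_size T (l r : seq T) : (size (l ++ r)).+1 = (size l).+1 -> r = [::].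
Proof. rewrite size_cat => H; apply: size0nil; lia. Qed.


Lemma step_then Sigma (M : lba Sigma) s s' l r x y c :
  @lstep Sigma M (s, l ++ x :: r, (size l).+1) (s', l ++ y :: r, (size l).+2) ->
  star (@lstep Sigma M) (s', (l ++ [:: y]) ++ r, (size (l ++ [:: y])).+1) c ->
  star (@lstep Sigma M) (s, l ++ x :: r, (size l).+1) c.
Proof.
move=> H1 H2; apply: star_step H1 _.
by move: H2; rewrite -catA size_cat addn1.
Qed.


Definition Kmax Sigma (A : grlowjfa Sigma) := \max_(r <- grules A) size r.1.2.

Lemma rule_le Sigma (A : grlowjfa Sigma) p x q : (p, x, q) \in grules A -> size x <= Kmax A.
Proof.
move=> H; rewrite /Kmax.
have := @leq_bigmax_seq _ (grules A) xpredT (fun r : gstate A * seq Sigma * gstate A => size r.1.2) _ H isT.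
by [].
Qed.

Lemma no_factor0 Sigma (A : grlowjfa Sigma) p : @no_factor Sigma A p [::].
Proof.
move=> w [q Hr]; rewrite infixs0; exact: grules_nonempty Hr.
Qed.

Lemma no_overlap0 (Sigma : finType) (x : seq Sigma) : no_overlap [::] x.
Proof.
move=> [u1 [u2 [x1 [x2 [Eu _ Hu2 _ _]]]]]; apply: Hu2.
by case: u2 Eu => //; case: u1.
Qed.

Lemma unit_eq (s s' : seq unit) : size s = size s' -> s = s'.
Proof. by elim: s s' => [|[] s IH] [|[] s'] //= [/IH ->]. Qed.

Lemma U1 (A : grlowjfa unit) p v g' : gstep ([::], p, v) g' ->
  exists x q v', (p, x, q) \in grules A /\ v = x ++ v' /\ g' = ([::], q, v').
Proof.
move E: ([::], p, v) => cfg H.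
case: H E => [t u x v0 p0 q H0 H1 H2 [Et Ep Ev] | x y p0 Hx _ [Ex _ _]].
- subst t p0 v.
  case Eu: u H1 H2 => [|c u'] H1 H2.
    by exists x, q, v0.
  exfalso.
  have hx := grules_nonempty H0.
  case Hsx: (size x) => [|[|k]].
  + by move/eqP: hx; apply; apply/eqP; rewrite -size_eq0 Hsx.
  + have Ex : x = [:: c] by apply: unit_eq; rewrite Hsx.
    move/negP: (H1 x (ex_intro _ q H0)); apply.
    by rewrite Ex; apply: (prefix_infix [:: c] u').
  + apply: H2.
    exists (take (size (c :: u') - 1) (c :: u')), (drop (size (c :: u') - 1) (c :: u')),
           (take (size x - 1) x), (drop (size x - 1) x).
    split; rewrite ?cat_take_drop //.
    * by move/(f_equal size); rewrite size_drop /=; lia.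
    * by move/(f_equal size); rewrite size_takel ?leq_subr // Hsx /=; lia.
    * by apply: unit_eq; rewrite size_cat size_drop size_takel ?leq_subr // Hsx /=; lia.
- by move: Hx; rewrite -Ex.
Qed.

Lemma shift_gen (A : grlowjfa unit) c c' : star (@gstep unit A) c c' ->
  forall p v q v', c = ([::], p, v) -> c' = ([::], q, v') ->
  forall e, star (@gstep unit A) ([::], p, v ++ e) ([::], q, v' ++ e).
Proof.
elim=> [x|x y z Hxy _ IH] p v q v' Ex Ez e.
- by rewrite Ex in Ez; case: Ez => -> ->; apply: star_refl.
- rewrite Ex in Hxy.
  have [x0 [q1 [v1 [Hr [Ev Ey]]]]] := U1 Hxy.
  apply: star_step (IH _ _ _ _ Ey Ez e).
  have := @gstep_rule unit A [::] [::] x0 (v1 ++ e) p q1 Hr (@no_factor0 unit A p) (@no_overlap0 unit x0).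
  by rewrite Ev /= catA.
Qed.

Lemma level_gen (A : grlowjfa unit) qf c c' : star (@gstep unit A) c c' ->
  c' = ([::], qf, [::]) -> forall p v, c = ([::], p, v) -> forall L, L <= size v ->
  exists q v', size v' <= L <= size v' + Kmax A /\
    star (@gstep unit A) ([::], p, v) ([::], q, v') /\
    star (@gstep unit A) ([::], q, v') ([::], qf, [::]).
Proof.
elim=> [x|x y z Hxy Hyz IH] Ez p v Ex L HL.
- rewrite Ex in Ez; case: Ez => -> Ev; subst v.
  exists qf, [::]; rewrite /= leqn0 in HL; rewrite (eqP HL) /=.
  by split=> //; split; apply: star_refl.
- rewrite Ex in Hxy.
  have [x0 [q1 [v1 [Hr [Ev Ey]]]]] := U1 Hxy.
  have Hx0 := rule_le Hr.
  case: (leqP L (size v1)) => H.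
  + have [q [v' [H1 [H2 H3]]]] := IH Ez _ _ Ey L H.
    exists q, v'; split=> //; split=> //.
    by apply: star_step H2; rewrite -Ey.
  + exists q1, v1; split.
      move: HL; rewrite Ev size_cat => HL; apply/andP; split; [exact: ltnW | apply: (leq_trans HL); by rewrite addnC leq_add2l].
    split; first by apply: star_one; rewrite -Ey.
    by rewrite -Ey -Ez.
Qed.

Definition pow2 (w : seq unit) : Prop := exists k, size w = 2 ^ k.

Lemma not_grlowj : ~ GRLOWJ pow2.
Proof.
case=> A HA.
set N := #|gstate A|. set K := Kmax A. set B := K + N * K.+1.
set m := 2 ^ B.
have HmB : B < m by apply: ltn_expl.
have [qf [Hqf Hrun]] : L_GRL A (nseq m tt) by apply/HA; exists B; rewrite size_nseq.
have Hlev : forall j : 'I_N.+1, exists qv : gstate A * seq unit,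
    size qv.2 <= K + j * K.+1 <= size qv.2 + K /\
    star (@gstep unit A) ([::], gstart A, nseq m tt) ([::], qv.1, qv.2) /\
    star (@gstep unit A) ([::], qv.1, qv.2) ([::], qf, [::]).
  move=> j.
  have Hj : K + j * K.+1 <= size (nseq m tt).
    rewrite size_nseq; apply: leq_trans (ltnW HmB).
    have := ltn_ord j; rewrite /B; nia.
  have [q [v' [H1 [H2 H3]]]] := level_gen Hrun erefl erefl Hj.
  by exists (q, v').
have [f Hf] := fin_all_exists Hlev.
have : ~~ injectiveb (fun j => (f j).1).
  apply/negP => /injectiveP Hinj.
  have := leq_card _ Hinj; rewrite card_ord -/N; lia.
case/injectivePn => i0 [j0 Hij0 Hq0].
have pump : forall i j : 'I_N.+1, i < j -> (f i).1 = (f j).1 -> False.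
  move=> i j Hij Hq.
  have [Hi1 [Hi2 Hi3]] := Hf i.
  have [Hj1 [Hj2 Hj3]] := Hf j.
  set d := size (f j).2 - size (f i).2.
  have Hd1 : size (f i).2 < size (f j).2.
    move: Hi1 Hj1 Hij; nia.
  have Hdj : size (f j).2 <= B.
    have := ltn_ord j; move: Hj1; rewrite /B; nia.
  have Hsh := shift_gen Hi2 erefl erefl (nseq d tt).
  have Ee : (f i).2 ++ nseq d tt = (f j).2.
    by apply: unit_eq; rewrite size_cat size_nseq /d; lia.
  rewrite Ee Hq in Hsh.
  have : L_GRL A (nseq m tt ++ nseq d tt) by exists qf; split=> //; apply: star_trans Hsh Hj3.
  move/HA => [k]; rewrite size_cat !size_nseq => Hk.
  have H1 : 2 ^ B < 2 ^ k by rewrite -Hk /d; lia.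
  rewrite ltn_exp2l // in H1.
  have : 2 ^ B.+1 <= 2 ^ k by rewrite leq_exp2l.
  rewrite expnS -Hk -/m /d; lia.
case: (ltngtP i0 j0) => H.
- exact: pump H Hq0.
- exact: pump H (esym Hq0).
- by move: Hij0; rewrite (val_inj H) eqxx.
Qed.

Definition st2 : finType := option (option (bool * bool)).

Definition d2L (s s' : st2) : bool := (s == Some None) && (s' == Some (Some (false, false))).
Definition d2R (s s' : st2) : bool :=
  ((s == Some (Some (true, false))) && (s' == None)) ||
  ((s == Some (Some (false, true))) && (s' == Some None)).
Definition d2 (s : st2) (a : bool) (s' : st2) (b : bool) (d : bool) : bool :=
  match s with
  | Some None => (s' == s) && (b == a) && ~~ d
  | Some (Some (par, big)) => d &&
      (if a then (if par then (s' == Some (Some (false, true))) && (b == false)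
                  else (s' == Some (Some (true, big))) && (b == true))
       else (s' == s) && (b == false))
  | None => false
  end.

Definition in2 (_ : unit) : bool := true.
Lemma in2_inj : injective in2. Proof. by move=> [] []. Qed.

Definition M2 : lba unit := @LBA unit st2 bool in2 in2_inj (Some None) [set None] d2L d2R d2.

Definition Inv2 (n : nat) (c : lconfig M2) : Prop :=
  match c with (s, tp, i) =>
  match s with
  | None => exists k, n = 2 ^ k
  | Some None => exists j, count id tp * 2 ^ j = n
  | Some (Some (par, big)) => exists l r a j, tp = l ++ r /\ i = (size l).+1 /\
      count id l = a + par /\ big = (0 < a) /\ (a.*2 + par + count id r) * 2 ^ j = n
  end end.

Lemma Inv2_step n c c' : @lstep unit M2 c c' -> Inv2 n c -> Inv2 n c'.
Proof.
case=> [p p' tp | p p' tp | p p' t1 t2 a b d].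
- rewrite /= /d2L => /andP[/eqP -> /eqP ->] /= [j Hj].
  by exists [::], tp, 0, j.
- rewrite /= /d2R => /orP[/andP[/eqP -> /eqP ->]|/andP[/eqP -> /eqP ->]] /=
    [l [r [a [j [Etp [Ei [Hl [Hb Hn]]]]]]]].
  + rewrite Etp in Ei; have Er := cat_nil_size Ei.
    subst r; case: a Hb Hl Hn => [|a] //= _ _ Hn; exists j; rewrite -Hn; lia.
  + rewrite Etp in Ei; have Er := cat_nil_size Ei.
    subst r; exists j.+1; rewrite Etp cats0 Hl expnS -Hn /=.
    by rewrite -!muln2; lia.
- case: p => [[[par big]|]|] //=.
  + move=> H [l [r [a' [j [Etp [Ei [Hl [Hb Hn]]]]]]]].
    have [El Er] := cat_split Etp (eq_add_S _ _ Ei); subst l r; clear Etp Ei.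
    move: H Hn; case: a; case: par Hl => Hl H Hn.
    * move: H => /andP[Hd /andP[/eqP -> /eqP ->]]; rewrite Hd.
      exists (t1 ++ [:: false]), t2, a'.+1, j; rewrite size_cat addn1 -catA /=.
      split=> //; split=> //; split; first by rewrite count_cat /= Hl; lia.
      split=> //; rewrite -Hn /=; lia.
    * move: H => /andP[Hd /andP[/eqP -> /eqP ->]]; rewrite Hd.
      exists (t1 ++ [:: true]), t2, a', j; rewrite size_cat addn1 -catA /=.
      split=> //; split=> //; split; first by rewrite count_cat /= Hl; lia.
      split=> //; rewrite -Hn /=; lia.
    * move: H => /andP[Hd /andP[/eqP -> /eqP ->]]; rewrite Hd.
      exists (t1 ++ [:: false]), t2, a', j; rewrite size_cat addn1 -catA /=.
      split=> //; split=> //; split; first by rewrite count_cat /= Hl; lia.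
      by [].
    * move: H => /andP[Hd /andP[/eqP -> /eqP ->]]; rewrite Hd.
      exists (t1 ++ [:: false]), t2, a', j; rewrite size_cat addn1 -catA /=.
      split=> //; split=> //; split; first by rewrite count_cat /= Hl; lia.
      by [].
  + case/andP=> /andP[/eqP -> /eqP ->] _ /= [j Hj].
    by exists j.
Qed.

Lemma Inv2_star n c c' : star (@lstep unit M2) c c' -> Inv2 n c -> Inv2 n c'.
Proof. by elim=> // x y z Hxy _ IH /(Inv2_step Hxy). Qed.

Lemma sweep2 r : forall l (par : bool) a, exists r' (par' : bool) a', size r' = size r /\
  star (@lstep unit M2) (Some (Some (par, 0 < a)), l ++ r, (size l).+1)
       (Some (Some (par', 0 < a')), l ++ r', (size (l ++ r')).+1) /\
  a'.*2 + par' = a.*2 + par + count id r /\ count id r' + a + par = a' + par'.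
Proof.
elim: r => [|x r IH] l par a.
- exists [::], par, a; rewrite cats0 addn0; split=> //; split=> //; exact: star_refl.
- case: x; [case: par|].
  + have [r' [par' [a' [Hs [Hr [H1 H2]]]]]] := IH (l ++ [:: false]) false a.+1.
    exists (false :: r'), par', a'; split; first by rewrite /= Hs.
    split; last by split; move: H1 H2 => /=; lia.
    eapply step_then.
      by apply: (@lstep_T unit M2 _ (Some (Some (false, true))) l r true false true); rewrite /= !eqxx.
    by rewrite -!catA /= in Hr *.
  + have [r' [par' [a' [Hs [Hr [H1 H2]]]]]] := IH (l ++ [:: true]) true a.
    exists (true :: r'), par', a'; split; first by rewrite /= Hs.
    split; last by split; move: H1 H2 => /=; lia.
    eapply step_then.
      by apply: (@lstep_T unit M2 _ (Some (Some (true, 0 < a))) l r true true true); rewrite /= !eqxx.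
    by rewrite -!catA /= in Hr *.
  + have [r' [par' [a' [Hs [Hr [H1 H2]]]]]] := IH (l ++ [:: false]) par a.
    exists (false :: r'), par', a'; split; first by rewrite /= Hs.
    split; last by split; move: H1 H2 => /=; lia.
    eapply step_then.
      by apply: (@lstep_T unit M2 _ (Some (Some (par, 0 < a))) l r false false true); rewrite /= !eqxx.
    by rewrite -!catA /= in Hr *.
Qed.

Lemma fwd2 k : forall tp, count id tp = 2 ^ k ->
  exists c', star (@lstep unit M2) (Some None, tp, 0) c' /\ c'.1.1 = None.
Proof.
elim: k => [|k IH] tp Htp.
- have [r' [par' [a' [Hs [Hr [H1 H2]]]]]] := sweep2 tp [::] false 0.
  have Ea : a' = 0 by move: H1; rewrite Htp /=; case E: par'; lia.
  have Ep : par' = true by move: H1; rewrite Htp Ea /=; case E: par'.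
  subst a' par'.
  exists (None, r', size r'); split=> //.
  apply: star_step (@lstep_L unit M2 _ (Some (Some (false, false))) tp _) _ => //.
  apply: star_trans Hr _ => /=.
  by apply: star_one; apply: (@lstep_R unit M2 (Some (Some (true, false))) None r').
- have [r' [par' [a' [Hs [Hr [H1 H2]]]]]] := sweep2 tp [::] false 0.
  have Ep : par' = false by move: H1; rewrite Htp expnS /=; case E: par'; lia.
  subst par'.
  have Ea : a' = 2 ^ k by move: H1; rewrite Htp expnS /=; lia.
  have Hc : count id r' = 2 ^ k by move: H2 => /=; lia.
  have [c' [Hc1 Hc2]] := IH r' Hc.
  exists c'; split=> //.
  apply: star_step (@lstep_L unit M2 _ (Some (Some (false, false))) tp _) _ => //.
  apply: star_trans Hr _ => /=.
  have Ha : 0 < a' by rewrite Ea expn_gt0.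
  rewrite Ha.
  apply: star_step (@lstep_R unit M2 (Some (Some (false, true))) (Some None) r' _) _ => //.
  apply: star_trans Hc1.
  apply: (@ret_run unit M2 (Some None)) => //.
  by move=> x; rewrite /= /d2 !eqxx.
Qed.

Lemma count_in2 (w : seq unit) : count id (map in2 w) = size w.
Proof. by elim: w => //= _ w ->. Qed.

Lemma cs_pow2 : CS pow2.
Proof.
exists M2 => w; split.
- case=> k Hk.
  have [[[p tp] i] [Hr Hp]] := fwd2 (etrans (count_in2 w) Hk).
  simpl in Hp; subst p.
  by exists None, tp, i; split; first by rewrite inE.
- case=> p [tp [i [Hp Hr]]].
  have H0 : Inv2 (size w) (lstart M2, map (linput M2) w, 0).
    by exists 0; rewrite expn0 muln1 count_in2.
  have := Inv2_star Hr H0.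
  by move: Hp; rewrite inE => /eqP ->.
Qed.

Definition lastK (T : Type) (k : nat) (s : seq T) := drop (size s - k) s.

Lemma lastK_size T k (s : seq T) : size (lastK k s) <= k.
Proof. rewrite /lastK size_drop; lia. Qed.

Lemma lastK_small T k (s : seq T) : size s <= k -> lastK k s = s.
Proof. by move=> H; rewrite /lastK (_ : size s - k = 0) ?drop0 //; lia. Qed.

Lemma lastK_pre T k (s : seq T) : s = take (size s - k) s ++ lastK k s.
Proof. by rewrite cat_take_drop. Qed.

Lemma drop_catl T n (s1 s2 : seq T) : n <= size s1 -> drop n (s1 ++ s2) = drop n s1 ++ s2.
Proof.
elim: s1 n => [|a s1 IH] [|n] //=.
- by case: s2.
- by move=> H; rewrite IH.
Qed.

Lemma lastK_snoc T k (u : seq T) c : lastK k (lastK k u ++ [:: c]) = lastK k (u ++ [:: c]).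
Proof.
case: k => [|k].
  by rewrite /lastK !subn0 !drop_size.
case: (leqP (size u) k.+1) => H; first by rewrite (lastK_small H).
rewrite /lastK !size_cat size_drop /=.
rewrite [in RHS]drop_catl; last by lia.
rewrite drop_catl; last by rewrite size_drop; lia.
rewrite drop_drop; congr (drop _ _ ++ _); lia.
Qed.

Lemma nf_snoc_back (Sigma : finType) (A : grlowjfa Sigma) (p : gstate A) (u : seq Sigma) c :
  no_factor p u -> no_factor p (lastK (Kmax A) u ++ [:: c]) -> no_factor p (u ++ [:: c]).
Proof.
move=> H1 H2 w Hw; apply/negP => /infixP [s1 [s3 E]].
have Hsw : size w <= Kmax A by case: Hw => q /rule_le.
have Hw0 : size w > 0 by case: Hw => q /grules_nonempty; case: (w).
case/lastP: s3 E => [|s3 y] E.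
- rewrite cats0 in E.
  move/negP: (H2 w Hw); apply; apply/infixP.
  exists (drop (size u - Kmax A) s1), [::]; rewrite cats0.
  have Hs1 : size u - Kmax A <= size s1.
    by move/(f_equal size): E; rewrite !size_cat /=; lia.
  rewrite /lastK -drop_catl; last by lia.
  by rewrite E drop_catl.
- move/negP: (H1 w Hw); apply; apply/infixP; exists s1, s3.
  move: E; rewrite -cats1 !catA !cats1 => /rcons_inj [-> _].
  by rewrite -!catA.
Qed.

Lemma nf_snoc_fwd (Sigma : finType) (A : grlowjfa Sigma) (p : gstate A) (u : seq Sigma) c k :
  no_factor p (u ++ [:: c]) -> no_factor p (lastK k u ++ [:: c]).
Proof.
move=> H w Hw; apply/negP => Hinf.
move/negP: (H w Hw); apply.
apply: (@infix_trans _ (lastK k u ++ [:: c])) => //.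
rewrite {2}(lastK_pre k u) -catA; exact: suffix_infix.
Qed.

Lemma nf_prefix (Sigma : finType) (A : grlowjfa Sigma) (p : gstate A) (u v : seq Sigma) :
  no_factor p (u ++ v) -> no_factor p u.
Proof.
move=> H w Hw; apply/negP => Hinf.
by move/negP: (H w Hw); apply; apply: infix_catr.
Qed.

Lemma no_ov_back (Sigma : finType) k (u x : seq Sigma) :
  size x <= k -> no_overlap (lastK k u) x -> no_overlap u x.
Proof.
move=> Hx H [u1 [u2 [x1 [x2 [Eu Ex Hu2 Hx1 E]]]]]; apply: H.
exists (drop (size u - k) u1), u2, x1, x2; split=> //.
have Hs : size u2 < size x.
  rewrite -E size_cat; have : size x1 <> 0 by move/size0nil.
  lia.
rewrite /lastK -drop_catl -?Eu //.
by move: Hs Hx; rewrite Eu size_cat; lia.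
Qed.

Lemma no_ov_fwd (Sigma : finType) k (u x : seq Sigma) :
  no_overlap u x -> no_overlap (lastK k u) x.
Proof.
move=> H [u1 [u2 [x1 [x2 [Eu Ex Hu2 Hx1 E]]]]]; apply: H.
exists (take (size u - k) u ++ u1), u2, x1, x2; split=> //.
by rewrite -catA -Eu -lastK_pre.
Qed.

Fixpoint allw (Sigma : finType) (n : nat) : seq (seq Sigma) :=
  if n is n'.+1 then [::] :: [seq a :: w | a <- enum Sigma, w <- allw Sigma n']
  else [:: [::]].

Lemma allwP (Sigma : finType) n (w : seq Sigma) : size w <= n -> w \in allw Sigma n.
Proof.
elim: n w => [|n IH] [|a w] //= H; try by rewrite inE.
rewrite inE; apply/orP; right.
by apply: (allpairs_f (fun a w => a :: w)); rewrite ?mem_enum ?IH.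
Qed.

Definition bufT (Sigma : finType) (A : grlowjfa Sigma) : finType :=
  seq_sub (allw Sigma (Kmax A)).

Lemma lastK_mem (Sigma : finType) (A : grlowjfa Sigma) (s : seq Sigma) :
  lastK (Kmax A) s \in allw Sigma (Kmax A).
Proof. by apply: allwP; apply: lastK_size. Qed.

Definition bf (Sigma : finType) (A : grlowjfa Sigma) (s : seq Sigma) : bufT A :=
  SeqSub (lastK_mem A s).

Lemma bf_val (Sigma : finType) (A : grlowjfa Sigma) (s : seq Sigma) :
  ssval (bf A s) = lastK (Kmax A) s.
Proof. by []. Qed.

Lemma bf_snoc (Sigma : finType) (A : grlowjfa Sigma) (u : seq Sigma) c :
  bf A (ssval (bf A u) ++ [:: c]) = bf A (u ++ [:: c]).
Proof. by apply: val_inj; rewrite /= lastK_snoc. Qed.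

Definition st1 (Sigma : finType) (A : grlowjfa Sigma) : finType :=
  ((gstate A * bufT A) + (gstate A * bufT A) + gstate A + gstate A + unit)%type.

Definition SScan (Sigma : finType) (A : grlowjfa Sigma) (p : gstate A) (b : bufT A) : st1 A :=
  inl (inl (inl (inl (p, b)))).
Definition SDel (Sigma : finType) (A : grlowjfa Sigma) (p : gstate A) (b : bufT A) : st1 A :=
  inl (inl (inl (inr (p, b)))).
Definition SRet (Sigma : finType) (A : grlowjfa Sigma) (p : gstate A) : st1 A :=
  inl (inl (inr p)).
Definition SChk (Sigma : finType) (A : grlowjfa Sigma) (p : gstate A) : st1 A :=
  inl (inr p).
Definition SAcc (Sigma : finType) (A : grlowjfa Sigma) : st1 A := inr tt.

Definition after (Sigma : finType) (A : grlowjfa Sigma) (q : gstate A) (xs : seq Sigma) : st1 A :=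
  if xs is [::] then SScan q (bf A [::]) else SDel q (bf A xs).

Definition TRc (Sigma : finType) (A : grlowjfa Sigma) (s : st1 A) (a : option Sigma)
  (s' : st1 A) (b : option Sigma) (d : bool) : Prop :=
  match s with
  | inl (inl (inl (inl (p, bu)))) => d = true /\ (
       (a = None /\ b = None /\ s' = s)
    \/ (exists c, a = Some c /\ b = Some c /\ no_factor p (ssval bu ++ [:: c]) /\
                  s' = SScan p (bf A (ssval bu ++ [:: c])))
    \/ (exists c xs q, a = Some c /\ b = None /\ (p, c :: xs, q) \in grules A /\
                  no_overlap (ssval bu) (c :: xs) /\ s' = after q xs))
  | inl (inl (inl (inr (q, dd)))) => d = true /\ (
       (a = None /\ b = None /\ s' = s)
    \/ (exists c xs, ssval dd = c :: xs /\ a = Some c /\ b = None /\ s' = after q xs))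
  | inl (inl (inr p)) => d = false /\ b = a /\ s' = s
  | inl (inr p) => d = true /\ a = None /\ b = None /\ s' = s
  | inr _ => False
  end.

Definition TLc (Sigma : finType) (A : grlowjfa Sigma) (s s' : st1 A) : Prop :=
  match s with
  | inl (inl (inr p)) => s' = SScan p (bf A [::]) \/ s' = SChk p
  | _ => False
  end.

Definition TRr (Sigma : finType) (A : grlowjfa Sigma) (s s' : st1 A) : Prop :=
  match s with
  | inl (inl (inl (inl (p, _)))) => s' = SRet p
  | inl (inr p) => p \in gfinal A /\ s' = SAcc A
  | _ => False
  end.

Lemma Some_inj' (Sigma : finType) : injective (@Some Sigma).
Proof. by move=> x y []. Qed.

Definition M1 (Sigma : finType) (A : grlowjfa Sigma) : lba Sigma :=
  @LBA Sigma (st1 A) (option Sigma) (@Some Sigma) (@Some_inj' Sigma) (SRet (gstart A))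
    [set SAcc A] (fun s s' => pb (TLc s s')) (fun s s' => pb (TRr s s'))
    (fun s a s' b d => pb (TRc s a s' b d)).

Definition live (Sigma : finType) (tp : seq (option Sigma)) : seq Sigma := pmap id tp.

Lemma live_cat (Sigma : finType) (s1 s2 : seq (option Sigma)) : live (s1 ++ s2) = live s1 ++ live s2.
Proof. exact: pmap_cat. Qed.

Lemma live_map (Sigma : finType) (w : seq Sigma) : live (map Some w) = w.
Proof. by elim: w => //= a w ->. Qed.

Lemma live_nil (Sigma : finType) (r : seq (option Sigma)) : live r = [::] -> all (fun a => a == None) r.
Proof. by elim: r => [|[a|] r IH] //= /IH ->. Qed.

Lemma live_split (Sigma : finType) (r : seq (option Sigma)) s1 c s2 :
  live r = s1 ++ c :: s2 -> exists r1 r2, r = r1 ++ Some c :: r2 /\ live r1 = s1 /\ live r2 = s2.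
Proof.
elim: r s1 => [|[a|] r IH] s1 //=.
- by case: s1.
- case: s1 => [|b s1] /= [E1 E2].
  + by subst a; exists [::], r.
  + have [r1 [r2 [-> [H1 H2]]]] := IH _ E2.
    by exists (Some a :: r1), r2; rewrite /= H1 E1.
- move=> /IH [r1 [r2 [-> [H1 H2]]]].
  by exists (None :: r1), r2.
Qed.

Definition Rel (Sigma : finType) (A : grlowjfa Sigma) (c : lconfig (M1 A)) (g : gconfig A) : Prop :=
  match c with (s, tp, i) =>
  match s with
  | inl (inl (inl (inl (p, bu)))) => exists l r t u0, tp = l ++ r /\ i = (size l).+1 /\
      g = (t, p, u0 ++ live r) /\ t ++ u0 = live l /\ no_factor p u0 /\ ssval bu = lastK (Kmax A) u0
  | inl (inl (inl (inr (q, dd)))) => exists l r t u0 p xd, tp = l ++ r /\ i = (size l).+1 /\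
      g = (t, p, u0 ++ xd ++ live r) /\ t ++ u0 = live l /\ no_factor p u0 /\
      (p, xd ++ ssval dd, q) \in grules A /\ no_overlap u0 (xd ++ ssval dd)
  | inl (inl (inr p)) => g = ([::], p, live tp)
  | inl (inr p) => g = ([::], p, live tp) /\ exists l r, tp = l ++ r /\ i = (size l).+1 /\ live l = [::]
  | inr _ => exists p, p \in gfinal A /\ g = ([::], p, [::])
  end end.

Lemma Rel_after (Sigma : finType) (A : grlowjfa Sigma) (t1 t2 : seq (option Sigma)) t u0 p xd c xs q :
  t ++ u0 = live t1 -> no_factor p u0 -> (p, xd ++ c :: xs, q) \in grules A ->
  no_overlap u0 (xd ++ c :: xs) ->
  exists g', star (@gstep Sigma A) (t, p, u0 ++ xd ++ c :: live t2) g' /\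
    Rel (after q xs, t1 ++ None :: t2, (size t1).+2) g'.
Proof.
move=> Ht Hnf Hr Hno.
case: xs Hr Hno => [|x xs] Hr Hno /=.
- exists (t ++ u0, q, live t2); split.
  + apply: star_one.
    have := @gstep_rule Sigma A t u0 (xd ++ [:: c]) (live t2) p q.
    rewrite -!catA /=; apply=> //; by rewrite cats1 -cats1.
  + exists (t1 ++ [:: None]), t2, (t ++ u0), [::].
    rewrite -catA size_cat addn1 cats0 live_cat Ht /= cats0.
    by split=> //; split=> //; split=> //; split=> //; split=> //; apply: no_factor0.
- exists (t, p, u0 ++ xd ++ c :: live t2); split; first exact: star_refl.
  have Hs : size (x :: xs) <= Kmax A.
    by move: (rule_le Hr); rewrite size_cat /=; lia.
  exists (t1 ++ [:: None]), t2, t, u0, p, (xd ++ [:: c]).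
  rewrite -catA size_cat addn1 live_cat /= cats0 ?bf_val (lastK_small Hs) -!catA /=.
  by do 6 (split=> //).
Qed.

Lemma Rel_step (Sigma : finType) (A : grlowjfa Sigma) c1 c2 g :
  @lstep Sigma (M1 A) c1 c2 -> Rel c1 g -> exists g', star (@gstep Sigma A) g g' /\ Rel c2 g'.
Proof.
case=> [p p' tp | p p' tp | p p' t1 t2 a b d] /pbP H.
- case: p H => [[[[[p0 bu]|[q dd]]|p0]|p0]|[]] //= H Eg.
  exists g; split; first exact: star_refl.
  case: H => ->.
  + exists [::], tp, [::], [::]; rewrite Eg.
    by do 4 (split=> //); split; [apply: no_factor0 | ].
  + by split=> //; exists [::], tp.
- case: p H => [[[[[p0 bu]|[q dd]]|p0]|p0]|[]] //= H.
  + move=> [l [r [t [u0 [Etp [Ei [Eg [Ht [Hnf Hb]]]]]]]]].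
    rewrite Etp in Ei; have Er := cat_nil_size Ei; subst r tp.
    rewrite H /=; rewrite cats0 in Eg *.
    case: t Ht Eg => [|x t] Ht Eg.
    * by exists g; split; [exact: star_refl | rewrite Eg -Ht /= cats0].
    * exists ([::], p0, live l); split=> //.
      apply: star_one; rewrite Eg -Ht /= cats0.
      by apply: gstep_jump.
  + case: H => Hp ->; move=> [Eg [l [r [Etp [Ei Hl]]]]].
    rewrite Etp in Ei; have Er := cat_nil_size Ei; subst r tp.
    exists g; split; first exact: star_refl.
    by exists p0; split=> //; rewrite Eg cats0 Hl.
- case: p H => [[[[[p0 bu]|[q dd]]|p0]|p0]|[]] //= H.
  + move=> [l [r [t [u0 [Etp [Ei [Eg [Ht [Hnf Hb]]]]]]]]].
    have [El Er] := cat_split (esym Etp) (esym (eq_add_S _ _ Ei)); subst l r; clear Etp Ei.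
    case: H => Hd [[Ea [Eb Es]] | [[c [Ea [Eb [Hnf' Es]]]] | [c [xs [q [Ea [Eb [Hr [Hno Es]]]]]]]]];
      subst d a b p'.
    * exists g; split; first exact: star_refl.
      exists (t1 ++ [:: None]), t2, t, u0.
      rewrite -catA size_cat addn1 live_cat /= cats0.
      by do 5 (split=> //).
    * exists g; split; first exact: star_refl.
      exists (t1 ++ [:: Some c]), t2, t, (u0 ++ [:: c]).
      rewrite -catA size_cat addn1 live_cat /= Eg -catA -Ht -catA.
      do 4 (split=> //); split.
      - by apply: (nf_snoc_back (A := A)) => //; rewrite -Hb.
      - by rewrite Hb lastK_snoc.
    * rewrite Eg /=.
      apply: (@Rel_after Sigma A t1 t2 t u0 p0 [::] c xs q) => //.
      by apply: no_ov_back (rule_le Hr) _; rewrite -Hb.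
  + move=> [l [r [t [u0 [p0 [xd [Etp [Ei [Eg [Ht [Hnf [Hr Hno]]]]]]]]]]]].
    have [El Er] := cat_split (esym Etp) (esym (eq_add_S _ _ Ei)); subst l r; clear Etp Ei.
    case: H => Hd [[Ea [Eb Es]] | [c [xs [Edd [Ea [Eb Es]]]]]]; subst d a b p'.
    * exists g; split; first exact: star_refl.
      exists (t1 ++ [:: None]), t2, t, u0, p0, xd.
      rewrite -catA size_cat addn1 live_cat /= cats0.
      by do 6 (split=> //).
    * rewrite Eg /=; rewrite Edd in Hr Hno.
      exact: (@Rel_after Sigma A t1 t2 t u0 p0 xd c xs q).
  + case: H => Hd [Eb Es]; subst d b p' => Eg.
    by exists g; split; first exact: star_refl.
  + case: H => Hd [Ea [Eb Es]]; subst d a b p' => [[Eg [l [r [Etp [Ei Hl]]]]]].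
    have [El Er] := cat_split (esym Etp) (esym (eq_add_S _ _ Ei)); subst l r; clear Etp Ei.
    exists g; split; first exact: star_refl.
    split=> //; exists (t1 ++ [:: None]), t2.
    by rewrite -catA size_cat addn1 live_cat Hl.
Qed.

Lemma scan_run (Sigma : finType) (A : grlowjfa Sigma) (r1 : seq (option Sigma)) :
  forall l r2 (p : gstate A) u0, no_factor p (u0 ++ live r1) ->
  star (@lstep Sigma (M1 A)) (SScan p (bf A u0), l ++ r1 ++ r2, (size l).+1)
       (SScan p (bf A (u0 ++ live r1)), l ++ r1 ++ r2, (size (l ++ r1)).+1).
Proof.
elim: r1 => [|[c|] r1 IH] l r2 p u0 H.
- by rewrite !cats0; apply: star_refl.
- eapply step_then.
    apply: (@lstep_T Sigma (M1 A) _ (SScan p (bf A (u0 ++ [:: c]))) l (r1 ++ r2) (Some c) (Some c) true).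
    apply: pbI; split=> //; right; left; exists c; split=> //; split=> //; split.
      apply: nf_snoc_fwd; apply: (@nf_prefix _ _ _ _ (live r1)).
      by rewrite -catA.
    by rewrite bf_snoc.
  have := IH (l ++ [:: Some c]) r2 p (u0 ++ [:: c]).
  by rewrite /= -!catA /=; apply.
- eapply step_then.
    apply: (@lstep_T Sigma (M1 A) _ (SScan p (bf A u0)) l (r1 ++ r2) None None true).
    by apply: pbI; split=> //; left.
  have := IH (l ++ [:: None]) r2 p u0 H.
  by rewrite /= -!catA /=.
Qed.

Lemma del_run (Sigma : finType) (A : grlowjfa Sigma) (xs : seq Sigma) :
  forall (l r : seq (option Sigma)) (q : gstate A) v, xs != [::] -> size xs <= Kmax A ->
  live r = xs ++ v ->
  exists l' r', star (@lstep Sigma (M1 A)) (SDel q (bf A xs), l ++ r, (size l).+1)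
                     (SScan q (bf A [::]), l' ++ r', (size l').+1) /\
                live l' = live l /\ live r' = v.
Proof.
elim: xs => [|y ys IH] // l r q v _ Hs Hr.
have [r1 [r2 [Er [H1 H2]]]] := @live_split Sigma r [::] y (ys ++ v) Hr.
subst r.
have Hsk := @skip_run Sigma (M1 A) (SDel q (bf A (y :: ys))) (fun a => a == None).
have Hsk' := Hsk _ r1 l (Some y :: r2) (live_nil H1).
have E1 : star (@lstep Sigma (M1 A)) (SDel q (bf A (y :: ys)), (l ++ r1) ++ Some y :: r2, (size (l ++ r1)).+1)
              (after q ys, (l ++ r1) ++ None :: r2, (size (l ++ r1)).+2).
  apply: star_one.
  apply: (@lstep_T Sigma (M1 A) _ (after q ys) (l ++ r1) r2 (Some y) None true).
  apply: pbI; split=> //; right; exists y, ys; split=> //.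
  by rewrite bf_val lastK_small.
clear Hr Hsk; case: ys IH Hs H2 E1 Hsk' => [|y' ys] IH Hs H2 E1 Hsk'.
- exists ((l ++ r1) ++ [:: None]), r2; split.
    apply: star_trans (Hsk' _) _; first by move=> a /eqP ->; apply: pbI; split=> //; left.
    rewrite [l ++ r1 ++ _]catA -[((l ++ r1) ++ [:: None]) ++ r2]catA (size_cat (l ++ r1)) /= addn1.
    exact: E1.
  by rewrite !live_cat H1 /= !cats0.
- have Hs' : size (y' :: ys) <= Kmax A by move: Hs => /=; lia.
  have [l' [r' [Hst [Hl' Hr']]]] := IH ((l ++ r1) ++ [:: None]) r2 q v isT Hs' H2.
  exists l', r'; split.
    apply: star_trans (Hsk' _) _; first by move=> a /eqP ->; apply: pbI; split=> //; left.
    rewrite [l ++ r1 ++ _]catA; apply: star_trans E1 _.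
    by move: Hst; rewrite -catA size_cat addn1.
  by rewrite Hl' !live_cat H1 /= !cats0.
Qed.

Definition FR (Sigma : finType) (A : grlowjfa Sigma) (g : gconfig A) (c : lconfig (M1 A)) : Prop :=
  match g with (t, p, v) =>
    exists l r, c = (SScan p (bf A [::]), l ++ r, (size l).+1) /\ live l = t /\ live r = v
  end.

Lemma ret_back (Sigma : finType) (A : grlowjfa Sigma) (p : gstate A) tp :
  star (@lstep Sigma (M1 A)) (SRet p, tp, size tp) (SRet p, tp, 0).
Proof.
apply: ret_run => // a; apply: pbI; by [].
Qed.

Lemma to_left (Sigma : finType) (A : grlowjfa Sigma) (p : gstate A) (bu : bufT A) tp :
  star (@lstep Sigma (M1 A)) (SScan p bu, tp, (size tp).+1) (SRet p, tp, 0).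
Proof.
apply: star_step (ret_back p tp).
by apply: lstep_R; apply: pbI.
Qed.

Lemma fwd_step (Sigma : finType) (A : grlowjfa Sigma) g g' c :
  @gstep Sigma A g g' -> FR g c -> exists c', star (@lstep Sigma (M1 A)) c c' /\ FR g' c'.
Proof.
case=> [t u x v p q Hr Hnf Hno | x y p Hx Hnf].
- case=> l [r [-> [Hl Hrv]]].
  case: x Hr Hno Hrv => [|c0 xs] Hr Hno Hrv; first by move: (grules_nonempty Hr).
  have [r1 [r2 [Er [H1 H2]]]] := live_split Hrv; subst r.
  have S1 := @scan_run Sigma A r1 l (Some c0 :: r2) p [::].
  rewrite /= H1 in S1; have {}S1 := S1 Hnf.
  have E1 : @lstep Sigma (M1 A) (SScan p (bf A u), (l ++ r1) ++ Some c0 :: r2, (size (l ++ r1)).+1)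
              (after q xs, (l ++ r1) ++ None :: r2, (size (l ++ r1)).+2).
    apply: (@lstep_T Sigma (M1 A) _ (after q xs) (l ++ r1) r2 (Some c0) None true).
    apply: pbI; split=> //; right; right; exists c0, xs, q; do 3 (split=> //).
    split=> //; exact: no_ov_fwd.
  clear Hrv; case: xs Hr Hno E1 H2 => [|x1 xs] Hr Hno E1 H2.
  + exists (SScan q (bf A [::]), ((l ++ r1) ++ [:: None]) ++ r2, (size ((l ++ r1) ++ [:: None])).+1).
    split.
      apply: star_trans S1 _; apply: star_one.
      rewrite [l ++ r1 ++ _]catA -[((l ++ r1) ++ [:: None]) ++ r2]catA (size_cat (l ++ r1)) /= addn1.
      exact: E1.
    exists ((l ++ r1) ++ [:: None]), r2; split=> //.
    by rewrite !live_cat Hl H1 /= cats0.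
  + have Hs : size (x1 :: xs) <= Kmax A by move: (rule_le Hr) => /=; lia.
    have [l' [r' [Hst [Hl' Hr']]]] := @del_run Sigma A (x1 :: xs) ((l ++ r1) ++ [:: None]) r2 q v isT Hs H2.
    exists (SScan q (bf A [::]), l' ++ r', (size l').+1); split.
      apply: star_trans S1 _; rewrite [l ++ r1 ++ _]catA; apply: star_step E1 _.
      by move: Hst; rewrite -[((l ++ r1) ++ [:: None]) ++ r2]catA (size_cat (l ++ r1)) /= addn1.
    exists l', r'; split=> //; split=> //.
    by rewrite Hl' !live_cat Hl H1 /= cats0.
- case=> l [r [-> [Hl Hr]]].
  have S1 := @scan_run Sigma A r l [::] p [::].
  rewrite /= Hr in S1; have {}S1 := S1 Hnf.
  rewrite !cats0 in S1.
  exists (SScan p (bf A [::]), [::] ++ (l ++ r), 1); split.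
    apply: star_trans S1 _.
    apply: star_trans (to_left _ _ _) _.
    by apply: star_one; apply: lstep_L; apply: pbI; left.
  by exists [::], (l ++ r); split=> //; split=> //; rewrite live_cat Hl Hr.
Qed.

Lemma fwd_star (Sigma : finType) (A : grlowjfa Sigma) g g' :
  star (@gstep Sigma A) g g' -> forall c, FR g c ->
  exists c', star (@lstep Sigma (M1 A)) c c' /\ FR g' c'.
Proof.
elim=> [x|x y z Hxy _ IH] c H; first by exists c; split=> //; apply: star_refl.
have [c1 [H1 H2]] := fwd_step Hxy H.
have [c2 [H3 H4]] := IH c1 H2.
by exists c2; split=> //; apply: star_trans H1 H3.
Qed.

Lemma fwd_final (Sigma : finType) (A : grlowjfa Sigma) (qf : gstate A) c :
  qf \in gfinal A -> FR ([::], qf, [::]) c ->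
  exists c', star (@lstep Sigma (M1 A)) c c' /\ c'.1.1 = SAcc A.
Proof.
move=> Hqf [l [r [-> [Hl Hr]]]].
exists (SAcc A, l ++ r, size (l ++ r)); split=> //.
have S1 := @scan_run Sigma A r l [::] qf [::].
rewrite /= Hr !cats0 in S1; have {}S1 := S1 (@no_factor0 Sigma A qf).
apply: star_trans S1 _.
apply: star_trans (to_left _ _ _) _.
apply: star_step (_ : @lstep Sigma (M1 A) _ (SChk qf, [::] ++ (l ++ r) ++ [::], (size [::]).+1)) _.
  by rewrite cats0; apply: lstep_L; apply: pbI; right.
have Sk := @skip_run Sigma (M1 A) (SChk qf) (fun a => a == None).
have {}Sk := Sk _ (l ++ r) [::] [::].
apply: star_trans (Sk _ _) _.
- by move=> a /eqP ->; apply: pbI.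
- by apply: live_nil; rewrite live_cat Hl Hr.
rewrite /= cats0; apply: star_one; apply: lstep_R; apply: pbI; by split.
Qed.

Lemma grlowj_cs (Sigma : finType) (L : seq Sigma -> Prop) : GRLOWJ L -> CS L.
Proof.
case=> A HA; exists (M1 A) => w; rewrite HA; split.
- case=> qf [Hqf Hrun].
  have H0 : FR ([::], gstart A, w) (SScan (gstart A) (bf A [::]), [::] ++ map Some w, 1).
    by exists [::], (map Some w); split=> //; rewrite live_map.
  have [c1 [H1 H2]] := fwd_star Hrun H0.
  have [[[s tp] i] [H3 H4]] := fwd_final Hqf H2.
  exists s, tp, i; split; first by rewrite inE -H4.
  apply: (star_step (y := (SScan (gstart A) (bf A [::]), [::] ++ map Some w, 1))).
    by apply: lstep_L; apply: pbI; left.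
  exact: star_trans H1 H3.
- case=> s [tp [i [Hs Hr]]].
  have Inv : forall c1 c2, star (@lstep Sigma (M1 A)) c1 c2 -> forall g,
      star (@gstep Sigma A) ([::], gstart A, w) g -> Rel c1 g ->
      exists g', star (@gstep Sigma A) ([::], gstart A, w) g' /\ Rel c2 g'.
    move=> c1 c2; elim=> [x|x y z Hxy _ IH] g Hg HR; first by exists g.
    have [g1 [H1 H2]] := Rel_step Hxy HR.
    exact: IH (star_trans Hg H1) H2.
  have [g [Hg HR]] := Inv _ _ Hr ([::], gstart A, w) (star_refl _ _) (esym (f_equal _ (live_map w))).
  move: Hs HR; rewrite inE => /eqP -> [p [Hp Eg]].
  by exists p; split=> //; rewrite -Eg.
Qed.


Theorem proposition5 :
  (forall (Sigma : finType) (L : seq Sigma -> Prop), GRLOWJ L -> CS L) /\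
  (exists (Sigma : finType) (L : seq Sigma -> Prop), CS L /\ ~ GRLOWJ L).
Proof.
split; first exact: grlowj_cs.
by exists _, pow2; split; [exact: cs_pow2 | exact: not_grlowj].
Qed.
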